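(* Let PS1 and PS2 be pure strategies (as in the context) with $m_{PS1}$ finite, and suppose PS2 is complementary to PS1, i.e. $\Delta_{PS1}(X)<\Delta_{PS2}(X)$ for some $X\in\mathcal{S}_{\mathrm{non}}$. Then there exists a mixed strategy MS derived from PS1 and PS2 whose average expected hitting time satisfies $\bar m_{MS}<\bar m_{PS1}$, where $\bar m=\frac{1}{|\mathcal{S}|}\sum_{X\in\mathcal{S}}m(X)$.
   Context: A fitness function $f$ on a finite set is to be maximised. A metaheuristic generates populations $\Phi_0,\Phi_1,\dots$. Let $\mathcal{S}$ be the finite set of all populations, $\mathcal{S}_{\mathrm{opt}}$ those containing at least one optimal solution, $\mathcal{S}_{\mathrm{non}}=\mathcal{S}\setminus\mathcal{S}_{\mathrm{opt}}$. The sequence is a time-homogeneous Markov chain on $\mathcal{S}$ with transition probabilities $P(X,Y)=\Pr(\Phi_{t+1}=Y\mid\Phi_t=X)$, every state of $\mathcal{S}_{\mathrm{opt}}$ absorbing. The expected hitting time $m(X)\in[0,\infty]$ is the expected number of generations until first entering $\mathcal{S}_{\mathrm{opt}}$ from $\Phi_0=X$ ($m(X)=0$ on $\mathcal{S}_{\mathrm{opt}}$). A pure strategy is such a time-independent transition matrix. PS1, PS2 are pure strategies with transition matrices $P_1,P_2$ on the same $\mathcal{S}$ (with $\mathcal{S}_{\mathrm{opt}}$ absorbing), expected hitting times $m_{PS1},m_{PS2}$. A mixed strategy MS derived from PS1 and PS2 assigns to each $X\in\mathcal{S}$ probabilities $P_X(PS1)\in[0,1]$, $P_X(PS2)=1-P_X(PS1)$,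 and has transition matrix $P_{MS}(X,Y)=P_X(PS1)P_1(X,Y)+P_X(PS2)P_2(X,Y)$, with expected hitting time $m_{MS}$. With $d(X)=m_{PS1}(X)$, for $X\in\mathcal{S}_{\mathrm{non}}$: $\Delta_{PS1}(X)=d(X)-\sum_{Y\in\mathcal{S}_{\mathrm{non}}}P_1(X,Y)d(Y)$, $\Delta_{PS2}(X)=d(X)-\sum_{Y\in\mathcal{S}_{\mathrm{non}}}P_2(X,Y)d(Y)$. *)

(* Defs.v *)
From mathcomp Require Import all_boot all_order all_algebra.
From mathcomp Require Import all_classical all_reals all_analysis.
Set Implicit Arguments. Unset Strict Implicit. Unset Printing Implicit Defensive.
Import Order.TTheory GRing.Theory Num.Theory.
Local Open Scope ring_scope.

Section Defs.
Variables (R : realType) (S : finType) (opt : {set S}).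

Definition pure_strategy (P : S -> S -> R) : Prop :=
  (forall X Y, 0 <= P X Y) /\ (forall X, \sum_(Y : S) P X Y = 1) /\
  (forall X, X \in opt -> P X X = 1).

(* surv P t X = Pr(Phi_0,...,Phi_t all in S_non | Phi_0 = X) = Pr(T > t). *)
Fixpoint surv (P : S -> S -> R) (t : nat) (X : S) : R :=
  match t with
  | 0 => (X \notin opt)%:R
  | t'.+1 => (X \notin opt)%:R * \sum_(Y : S) P X Y * surv P t' Y
  end.

(* Expected hitting time of S_opt, E[T] = sum_{t>=0} Pr(T > t), in [0, +oo]. *)
Definition hitting_time (P : S -> S -> R) (X : S) : \bar R :=
  (\sum_(0 <= t <oo) (surv P t X)%:E)%E.

Definition mixed (q : S -> R) (P1 P2 : S -> S -> R) : S -> S -> R :=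
  fun X Y => q X * P1 X Y + (1 - q X) * P2 X Y.

Definition Delta (P : S -> S -> R) (d : S -> R) (X : S) : R :=
  d X - \sum_(Y | Y \notin opt) P X Y * d Y.

Definition avg_time (m : S -> \bar R) : \bar R :=
  ((\sum_(X : S) m X) * ((#|S|%:R : R)^-1)%:E)%E.

End Defs.

(* Main.v *)
Require Import Defs.
From mathcomp Require Import all_boot all_order all_algebra.
From mathcomp Require Import all_classical all_reals all_analysis.
From mathcomp Require Import ring lra.
Import Order.TTheory GRing.Theory Num.Theory numFieldNormedType.Exports.
Local Open Scope ring_scope.

Section H.
Local Open Scope classical_set_scope.
Variables (R : realType) (S : finType) (opt : {set S}).

Implicit Types P : S -> S -> R.
Definition part (P : S -> S -> R) (n : nat) (X : S) : R :=
  \sum_(0 <= t < n) surv opt P t X.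

Lemma surv_ge0 P : (forall X Y, 0 <= P X Y) -> forall t X, 0 <= surv opt P t X.
Proof.
move=> P0; elim=> [|t IH] X /=; first by rewrite ler0n.
apply: mulr_ge0; first by rewrite ler0n.
by apply: sumr_ge0 => Y _; apply: mulr_ge0.
Qed.

Lemma surv_opt P t X : X \in opt -> surv opt P t X = 0.
Proof. by case: t => [|t] /= ->; rewrite ?mul0r. Qed.

Lemma part_opt P n X : X \in opt -> part P n X = 0.
Proof. by move=> H; rewrite /part big1 // => t _; rewrite surv_opt. Qed.

Lemma part_rec P n X : part P n.+1 X =
  (X \notin opt)%:R * (1 + \sum_(Y : S) P X Y * part P n Y).
Proof.
rewrite /part big_nat_recl //= mulrDr mulr1; congr (_ + _).
under eq_bigr do rewrite /= mulr_sumr.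
rewrite exchange_big /= mulr_sumr; apply: eq_bigr => Y _.
rewrite mulr_sumr mulr_sumr; apply: eq_bigr => t _; by rewrite mulrA.
Qed.

Lemma part_ht P n X : (forall X Y, 0 <= P X Y) ->
  ((part P n X)%:E <= hitting_time opt P X)%E.
Proof.
move=> P0; rewrite /part -sumEFin.
by apply: nneseries_lim_ge => k _ _; rewrite lee_fin surv_ge0.
Qed.

Lemma ht_le P X c : (forall X Y, 0 <= P X Y) ->
  (forall n, part P n X <= c) -> (hitting_time opt P X <= c%:E)%E.
Proof.
move=> P0 Hc; apply: lime_le.
  by apply: is_cvg_nneseries => k _ _; rewrite lee_fin surv_ge0.
by apply: nearW => n; rewrite sumEFin lee_fin; apply: Hc.
Qed.

Lemma ht_ge0 P X : (forall X Y, 0 <= P X Y) -> (0 <= hitting_time opt P X)%E.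
Proof.
move=> P0; apply: (le_trans _ (@part_ht P 0 X P0)); by rewrite /part big_geq.
Qed.

Lemma part_cvg P X : (forall X Y, 0 <= P X Y) -> (hitting_time opt P X < +oo)%E ->
  ((fun n => part P n X) @ \oo --> fine (hitting_time opt P X)).
Proof.
move=> P0 Hf.
have fin : hitting_time opt P X \is a fin_num by rewrite ge0_fin_numE // ht_ge0.
have cv : (fun n => \sum_(0 <= t < n) (surv opt P t X)%:E) @ \oo -->
    hitting_time opt P X.
  by apply: is_cvg_nneseries => k _ _; rewrite lee_fin surv_ge0.
rewrite -(fineK fin) in cv.
move/fine_cvg: cv; apply: cvg_trans; apply: near_eq_cvg; apply: nearW => n /=.
by rewrite sumEFin.
Qed.


Lemma ht_eq P X : (forall X Y, 0 <= P X Y) ->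
  (forall X, hitting_time opt P X < +oo)%E ->
  fine (hitting_time opt P X) = (X \notin opt)%:R *
     (1 + \sum_(Y : S) P X Y * fine (hitting_time opt P Y)).
Proof.
move=> P0 Hf.
have c1 := @part_cvg P X P0 (Hf X).
have c2 : (fun n => part P n.+1 X) @ \oo --> fine (hitting_time opt P X).
  by move: c1; rewrite -(cvg_shiftS (fun n => part P n X)).
have c3 : (fun n => part P n.+1 X) @ \oo --> (X \notin opt)%:R *
     (1 + \sum_(Y : S) P X Y * fine (hitting_time opt P Y)).
  under eq_cvg do rewrite part_rec.
  apply: cvgM; first exact: cvg_cst.
  apply: cvgD; first exact: cvg_cst.
  apply: (@cvg_big _ _ +%R 0 predT add_continuous) => Y _.
  apply: cvgM; first exact: cvg_cst.
  exact: part_cvg.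
exact: (cvg_unique _ c2 c3).
Qed.


End H.
Arguments part {R S} opt P n X.
Arguments part_opt {R S opt} P n {X}.
Arguments part_rec {R S opt} P n X.
Arguments ht_le {R S opt P X c}.
Arguments ht_ge0 {R S opt P X}.
Arguments ht_eq {R S opt P X}.

Theorem corollary4 (R : realType) (S : finType) (opt : {set S})
    (P1 P2 : S -> S -> R) :
  pure_strategy opt P1 -> pure_strategy opt P2 ->
  (forall X, (hitting_time opt P1 X < +oo)%E) ->
  (exists X, X \notin opt /\
     Delta opt P1 (fun Y => fine (hitting_time opt P1 Y)) X <
     Delta opt P2 (fun Y => fine (hitting_time opt P1 Y)) X) ->
  exists q : S -> R, (forall X, 0 <= q X <= 1) /\
    (avg_time (hitting_time opt (mixed q P1 P2)) <
     avg_time (hitting_time opt P1))%E.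
Proof.
move=> [P1ge0 _] [P2ge0 _] Hf [X0 [X0n HD]].
set d := fun Y => fine (hitting_time opt P1 Y).
have dge0 : forall Y, 0 <= d Y.
  by move=> Y; apply: fine_ge0; exact: ht_ge0 P1ge0.
have deq : forall X, d X = (X \notin opt)%:R * (1 + \sum_(Y : S) P1 X Y * d Y).
  by move=> X; exact: ht_eq P1ge0 Hf.
have dopt : forall Y, Y \in opt -> d Y = 0.
  by move=> Y Yo; rewrite deq Yo /= mul0r.
have sumnon : forall (P : S -> S -> R) (f : S -> R) X, (forall Y, Y \in opt -> f Y = 0) ->
    \sum_(Y | Y \notin opt) P X Y * f Y = \sum_Y P X Y * f Y.
  move=> P f X f0; rewrite big_mkcond /=; apply: eq_bigr => Y _.
  by case: ifPn => //; rewrite negbK => /f0 ->; rewrite mulr0.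
have D1 : forall X, X \notin opt -> Delta opt P1 d X = 1.
  move=> X Xn; rewrite /Delta sumnon // {1}deq Xn /= mul1r.
  by rewrite addrK.
set eps := Delta opt P2 d X0 - 1.
have eps0 : 0 < eps by rewrite /eps subr_gt0 -(D1 X0 X0n).
pose q := fun X => if X == X0 then 0 else 1 : R.
exists q; split.
  by move=> X; rewrite /q; case: ifP => _; rewrite lexx ?ler01.
set P := mixed q P1 P2.
have Pge0 : forall X Y, 0 <= P X Y.
  move=> X Y; rewrite /P /mixed /q; case: ifP => _.
    by rewrite mul0r add0r subr0 mul1r.
  by rewrite mul1r subrr mul0r addr0.
have PX0 : forall Y, P X0 Y = P2 X0 Y.
  by move=> Y; rewrite /P /mixed /q eqxx mul0r add0r subr0 mul1r.
have PX : forall X Y, X != X0 -> P X Y = P1 X Y.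
  by move=> X Y /negbTE H; rewrite /P /mixed /q H mul1r subrr mul0r addr0.
pose B := fun X => d X - (X == X0)%:R * eps.
have BX0 : B X0 = 1 + \sum_(Y | Y \notin opt) P2 X0 Y * d Y.
  rewrite /B eqxx mul1r /eps /Delta.
  ring.
have BX : forall X, X != X0 -> B X = d X.
  by move=> X /negbTE H; rewrite /B H mul0r subr0.
have Bge0 : forall X, 0 <= B X.
  move=> X; case: (eqVneq X X0) => [->|H]; last by rewrite BX.
  rewrite BX0; apply: addr_ge0 => //; apply: sumr_ge0 => Y _.
  by apply: mulr_ge0.
have Bd : forall X, B X <= d X.
  by move=> X; rewrite /B lerBlDr lerDl; apply: mulr_ge0 => //; apply: ltW.
have key : forall n X, part opt P n X <= B X.
  elim => [|n IH] X; first by rewrite /part big_geq.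
  rewrite part_rec; case Xo: (X \in opt) => /=; first by rewrite mul0r.
  rewrite mul1r.
  have Hs : forall Q : S -> S -> R, (forall Y, P X Y = Q X Y) ->
      \sum_Y P X Y * part opt P n Y <= \sum_(Y | Y \notin opt) Q X Y * d Y.
    move=> Q HQ; rewrite -(sumnon P _ X (fun Y Yo => part_opt P n Yo)).
    apply: ler_sum => Y _; rewrite HQ -HQ; apply: ler_wpM2l => //.
    exact: (le_trans (IH Y)).
  case: (eqVneq X X0) => [EX|H].
    rewrite EX BX0 lerD2l -EX; apply: Hs => Y; rewrite EX; exact: PX0.
  have e := D1 X (negbT Xo); rewrite /Delta in e.
  have h := Hs P1 (fun Y => PX X Y H).
  rewrite BX //; lra.
have htP : forall X, (hitting_time opt P X <= (B X)%:E)%E.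
  by move=> X; apply: ht_le => // n; apply: key.
have ht1 : forall X, hitting_time opt P1 X = (d X)%:E.
  move=> X; rewrite /d fineK // ge0_fin_numE //; exact: ht_ge0 P1ge0.
have card0 : (0 < #|S|)%N by apply/card_gt0P; exists X0.
rewrite /avg_time lte_pmul2r //; last first.
  by rewrite lte_fin invr_gt0 ltr0n.
apply: (@le_lt_trans _ _ (\sum_X (B X)%:E)%E); first by apply: lee_sum => X _; exact: htP.
under [X in (_ < X)%E]eq_bigr do rewrite ht1.
rewrite !sumEFin lte_fin.
have -> : \sum_X B X = \sum_X d X - eps.
  rewrite /B sumrB; congr (_ - _).
  rewrite (bigD1 X0) //= eqxx mul1r big1 ?addr0 // => i /negbTE ->.
  by rewrite mul0r.
by rewrite ltrBlDr ltrDl.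
Qed.
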